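(* Let $u$ be the field with $u(x+\tfrac12,t+\tfrac12)=-1$ if both integers $x$ and $t$ are even and $u(x+\tfrac12,t+\tfrac12)=+1$ otherwise. For integers $x,t$ with $x+t$ even and $t>0$ set $b_1(x,t)=a_1(2x-1,2t-1,u)$ and $b_2(x,t)=a_2(2x-1,2t-1,u)$, and for $x+t$ odd set $b_1(x,t)=b_2(x,t)=0$. Then for all integers $x,t$ with $x+t$ even and $t>1$: $$b_1(x,t)=\tfrac12\big[b_1(x+1,t-1)+b_2(x+1,t-1)\big],\qquad b_2(x,t)=\tfrac12\big[3\,b_1(x-1,t-1)-b_2(x-1,t-1)\big].$$
   Context: A checker path is a finite sequence of integer points $s_0,s_1,\dots,s_t$ in the plane such that each vector $s_{k+1}-s_k$ equals $(1,1)$ or $(-1,1)$. A turn is a point $s_k$ with $0<k<t$ such that the vectors $s_{k+1}-s_k$ and $s_{k-1}-s_k$ are orthogonal; $\mathrm{turns}(s)$ is the number of turns. An edge is a segment joining two diagonally adjacent integer points (differing by $(\pm1,1)$) whose coordinate sums are even; every step $s_ks_{k+1}$ of a checker path starting at $(0,0)$ is an edge. A field is a map $u$ from edges to $\{-1,1\}$; for half-integers $x,t$, $u(x,t)$ denotes the value of $u$ on the edge with midpoint $(x,t)$. For integers $x$ and $t\ge 1$ define $$a(x,t,u):=2^{(1-t)/2}\, i\sum_s(-i)^{\mathrm{turns}(s)}u(s_0s_1)u(s_1s_2)\cdots u(s_{t-1}s_t),$$ the sum over all checker paths $s=(s_0,\dots,s_t)$ with $s_0=(0,0)$, $s_1=(1,1)$,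 $s_t=(x,t)$ (an empty sum is $0$). Let $a_1(x,t,u)$ and $a_2(x,t,u)$ be the real and imaginary parts of $a(x,t,u)$. *)

(* Defs.v *)
From HB Require Import structures.
From mathcomp Require Import all_boot all_order all_algebra algC.
Set Implicit Arguments. Unset Strict Implicit. Unset Printing Implicit Defensive.
Import Order.TTheory GRing.Theory Num.Theory.
Local Open Scope ring_scope.

(* A checker path starting at (0,0) with t steps is encoded by the sequence
   s : t.-tuple bool of its horizontal steps (true = step (1,1),
   false = step (-1,1)). *)
Definition dstep (b : bool) : int := if b then 1 else -1.

(* x-coordinate of s_k (the t-coordinate of s_k is k). *)
Definition pos (s : seq bool) (k : nat) : int :=
  \sum_(j < k) dstep (nth false s j).

(* number of turns: indices 0<k<t where the direction changes (this is exactly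
   the orthogonality of s_{k+1}-s_k and s_{k-1}-s_k). *)
Definition turns (s : seq bool) : nat :=
  \sum_(1 <= k < size s) (nth false s k.-1 != nth false s k : nat).

(* A field.  Every edge joining points with even coordinate sum has midpoint
   (X+1/2, T+1/2) for integers X, T; we encode u by  fu X T := u(X+1/2,T+1/2). *)
Definition field := int -> int -> algC.

(* value of u on the k-th step s_k s_{k+1}: its midpoint is
   (pos s k + dstep/2, k + 1/2) = (X + 1/2, k + 1/2). *)
Definition step_mid_x (s : seq bool) (k : nat) : int :=
  pos s k - (~~ nth false s k : bool)%:Z.

Definition weight (u : field) (s : seq bool) : algC :=
  \prod_(k < size s) u (step_mid_x s k) k%:Z.

(* a(x,t,u) = 2^{(1-t)/2} i sum_s (-i)^turns(s) u(s0s1)...u(s_{t-1}s_t),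
   over paths with s_0=(0,0), s_1=(1,1), s_t=(x,t).  Meaningful for t >= 1. *)
Definition a (x : int) (t : nat) (u : field) : algC :=
  ((sqrtC 2) ^+ t.-1)^-1 * 'i *
  \sum_(s : t.-tuple bool | nth false s 0 && (pos s t == x))
     (- 'i) ^+ turns s * weight u s.

Definition a1 x t u : algC := 'Re (a x t u).
Definition a2 x t u : algC := 'Im (a x t u).

Definition u0 : field :=
  fun X T => if (2 %| X)%Z && (2 %| T)%Z then -1 else 1.

(* b1, b2: defined as in the paper for x+t even and t>0, zero for x+t odd;
   the remaining case (x+t even, t<=0) is never used and set to 0. *)
Definition b1 (x t : int) : algC :=
  if (2 %| x + t)%Z then (if 0 < t then a1 (2 * x - 1) (absz (2 * t - 1)%R) u0 else 0)
  else 0.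
Definition b2 (x t : int) : algC :=
  if (2 %| x + t)%Z then (if 0 < t then a2 (2 * x - 1) (absz (2 * t - 1)%R) u0 else 0)
  else 0.

(* Main.v *)
Require Import Defs.
From HB Require Import structures.
From mathcomp Require Import all_boot all_order all_algebra algC ring zify.
Import Order.TTheory GRing.Theory Num.Theory.
Local Open Scope ring_scope.

Fixpoint S (n : nat) : seq (seq bool) :=
  match n with
  | 0 => [:: [::]]
  | n'.+1 => [seq rcons s true | s <- S n'] ++ [seq rcons s false | s <- S n']
  end.

Lemma mem_S n s : (s \in S n) = (size s == n).
Proof.
elim: n s => [|n IH] s /=.
  by case: s.
rewrite mem_cat; apply/idP/idP.
  by case/orP=> /mapP [s' Hs' ->]; rewrite size_rcons eqSS -IH.
case/lastP: s => [|s' b]; first by [].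
rewrite size_rcons eqSS -IH => Hs'.
by case: b; [rewrite (map_f (rcons^~ true)) | rewrite orbC (map_f (rcons^~ false))].
Qed.

Lemma uniq_S n : uniq (S n).
Proof.
elim: n => [|n IH] //=.
rewrite cat_uniq !(map_inj_uniq (@rcons_injl _ _)) IH /=.
by rewrite andbT; apply/hasP => -[s /mapP [s1 _ ->] /mapP [s2 _ /rcons_inj]] [].
Qed.

Lemma tuple_S (F : seq bool -> algC) n :
  \sum_(s : n.-tuple bool) F s = \sum_(s <- S n) F s.
Proof.
rewrite -(big_map (fun s : n.-tuple bool => val s) xpredT F).
apply: perm_big; apply: uniq_perm.
- by rewrite (map_inj_uniq val_inj) index_enum_uniq.
- exact: uniq_S.
move=> s; rewrite mem_S; apply/idP/idP.
  by case/mapP=> s' _ ->; rewrite size_tuple.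
move=> /eqP Hs; apply/mapP; exists (Tuple (introT eqP Hs)) => //.
exact: mem_index_enum.
Qed.

Lemma pos_rcons_le (s : seq bool) b k : (k <= size s)%N -> pos (rcons s b) k = pos s k.
Proof.
move=> hk; rewrite /pos; apply: eq_bigr => j _.
by rewrite nth_rcons (leq_trans (ltn_ord j) hk).
Qed.

Lemma pos_rcons (s : seq bool) b : pos (rcons s b) (size s).+1 = pos s (size s) + dstep b.
Proof.
rewrite /pos big_ord_recr /= nth_rcons ltnn eqxx; congr (_ + _).
by apply: eq_bigr => j _; rewrite nth_rcons ltn_ord.
Qed.

Lemma nth0_rcons (s : seq bool) b : (0 < size s)%N -> nth false (rcons s b) 0 = nth false s 0.
Proof. by move=> h; rewrite nth_rcons h. Qed.

Lemma turns_rcons (s : seq bool) b : (0 < size s)%N ->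
  turns (rcons s b) = (turns s + (nth false s (size s).-1 != b))%N.
Proof.
move=> h; rewrite /turns size_rcons big_nat_recr //=.
rewrite !nth_rcons ltnn eqxx prednK // leqnn; congr (_ + _)%N.
apply: eq_big_nat => k /andP [h1 h2].
by rewrite !nth_rcons h2 (leq_ltn_trans (leq_pred k) h2).
Qed.

Lemma weight_rcons (u : field) (s : seq bool) b :
  weight u (rcons s b) = weight u s * u (pos s (size s) - (~~ b)%:Z) (size s)%:Z.
Proof.
rewrite /weight size_rcons big_ord_recr /=; congr (_ * _).
  apply: eq_bigr => j _; rewrite /step_mid_x pos_rcons_le ?nth_rcons ?ltn_ord //.
  exact: ltnW.
by rewrite /step_mid_x pos_rcons_le // nth_rcons ltnn eqxx.
Qed.

Lemma S_succ n : S n.+1 = [seq rcons s true | s <- S n] ++ [seq rcons s false | s <- S n].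
Proof. by []. Qed.

Lemma sum_S_succ n (F : seq bool -> algC) :
  \sum_(s <- S n.+1) F s = \sum_(s <- S n) (F (rcons s true) + F (rcons s false)).
Proof. by rewrite S_succ big_cat !big_map big_split. Qed.

Definition G (n : nat) (x : int) (d : bool) : algC :=
  \sum_(s <- S n) (if [&& nth false s 0, pos s n == x & nth false s n.-1 == d]
                   then (- 'i) ^+ turns s * weight u0 s else 0).

Lemma G_step n x d : G n.+2 x d =
  u0 (x - dstep d - (~~ d)%:Z) n.+1%:Z *
    (G n.+1 (x - dstep d) d + (- 'i) * G n.+1 (x - dstep d) (~~ d)).
Proof.
rewrite /G sum_S_succ mulrDr mulrA !big_distrr -big_split.
rewrite !big_seq; apply: eq_bigr => s; rewrite mem_S => /eqP hs.
have h0 : (0 < size s)%N by rewrite hs.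
rewrite -hs /= !nth0_rcons // !pos_rcons !turns_rcons // !weight_rcons !nth_rcons ltnn eqxx.
move: (pos s (size s)) (nth false s 0) (nth false s (size s).-1) (turns s) (weight u0 s) => p c e T W.
have E b : (p == x - dstep b) = (x == p + dstep b) by rewrite eq_sym subr_eq.
rewrite !E ![p + _ == x]eq_sym.
have F1 : (p + 1 == p - 1) = false by apply/negbTE; lia.
have F2 : (p - 1 == p + 1) = false by apply/negbTE; lia.
case: c; last by rewrite /= !mulr0 addr0.
case: d; case: e; rewrite /=; case: eqP => [->|_] //=;
  rewrite ?F1 ?F2 ?addrK ?subrK ?mulr0 ?addr0 ?add0r ?exprD ?expr1 ?expr0 /=; try ring.
all: try (case: eqP => [->|_] //=;
  rewrite ?F1 ?F2 ?addrK ?subrK ?mulr0 ?addr0 ?add0r ?exprD ?expr1 ?expr0 /=; try ring).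
all: by rewrite andbF.
Qed.

Definition ui (X T : int) : int := if (2 %| X)%Z && (2 %| T)%Z then -1 else 1.
Lemma u0E X T : u0 X T = (ui X T)%:~R.
Proof. by rewrite /u0 /ui; case: ifP. Qed.

Fixpoint D (n : nat) (x : int) : int * int :=
  match n with
  | 0 => (if x == 1 then -1 else 0, 0)
  | n'.+1 => (ui (x - 1) n'.+1%:Z * ((D n' (x - 1)).1 - (D n' (x - 1)).2),
              ui x n'.+1%:Z * ((D n' (x + 1)).1 + (D n' (x + 1)).2))
  end.

Lemma G_D n x : G n.+1 x true = (D n x).1%:~R /\ G n.+1 x false = - 'i * (D n x).2%:~R.
Proof.
elim: n x => [|n IH] x.
  rewrite /G /= !big_cons !big_nil /pos /turns /weight /= !big_ord1 big_geq // expr0 mul1r.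
  rewrite /step_mid_x /pos big_ord0 /u0 /= eq_sym !andbT andbF !addr0 mulr0; split => //.
  by case: (x == 1).
rewrite !G_step /=.
have [IH1 IH2] := IH (x - 1); have [IH3 IH4] := IH (x + 1).
rewrite subr0 opprK addrK IH1 IH2 IH3 IH4 !u0E !rmorphM /= rmorphB rmorphD /=.
have hi : (- 'i) * (- 'i) = -1 :> algC by rewrite mulrNN -expr2 sqrCi.
split.
  by rewrite [- 'i * (- 'i * _)]mulrA hi; ring.
by ring.
Qed.

Definition cc (n : nat) : algC := ((sqrtC 2) ^+ n)^-1.

Lemma cc_real n : cc n \is Num.real.
Proof. by rewrite /cc rpredV rpredX // ger0_real // sqrtC_ge0 ler0n. Qed.

Lemma a_D n x : a x n.+1 u0 = cc n * (D n x).2%:~R + 'i * (cc n * (D n x).1%:~R).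
Proof.
rewrite /a big_mkcond /=.
rewrite (tuple_S (fun s => if nth false s 0 && (pos s n.+1 == x) then (- 'i) ^+ turns s * weight u0 s else 0)).
have -> : \sum_(s <- S n.+1) (if nth false s 0 && (pos s n.+1 == x) then (- 'i) ^+ turns s * weight u0 s else 0)
   = G n.+1 x true + G n.+1 x false.
  rewrite /G -big_split; apply: eq_bigr => s _ /=.
  by case: (nth false s 0); case: (pos s n.+1 == x); case: (nth false s n) => /=; rewrite ?addr0 ?add0r.
have [-> ->] := G_D n x.
rewrite -/(cc n).
have hi y : 'i * (- 'i * y) = y :> algC by rewrite mulrA mulrN -expr2 sqrCi opprK mul1r.
by rewrite mulrDr -[cc n * 'i * (- 'i * _)]mulrA hi; ring.
Qed.

Lemma a1_D n x : a1 x n.+1 u0 = cc n * (D n x).2%:~R.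
Proof. by rewrite /a1 a_D Re_rect // rpredM ?cc_real ?realz. Qed.
Lemma a2_D n x : a2 x n.+1 u0 = cc n * (D n x).1%:~R.
Proof. by rewrite /a2 a_D Im_rect // rpredM ?cc_real ?realz. Qed.

Lemma ui_T_odd X T : ~~ (2 %| T)%Z -> ui X T = 1.
Proof. by rewrite /ui => /negbTE ->; rewrite andbF. Qed.
Lemma ui_X_odd X T : ~~ (2 %| X)%Z -> ui X T = 1.
Proof. by rewrite /ui => /negbTE ->. Qed.
Lemma ui_even X T : (2 %| X)%Z -> (2 %| T)%Z -> ui X T = -1.
Proof. by rewrite /ui => -> ->. Qed.

Lemma two_step m y : ~~ (2 %| y)%Z ->
  (D (2 * m).+2 y).2 = (D (2 * m) y).1 - (D (2 * m) y).2 + (D (2 * m) (y+2)).2 + (D (2 * m) (y+2)).1 /\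
  (D (2 * m).+2 y).1 = (D (2 * m) y).2 + (D (2 * m) y).1 - (D (2 * m) (y-2)).1 + (D (2 * m) (y-2)).2.
Proof.
move=> hy /=.
have e1 : y + 1 - 1 = y by ring.
have e2 : y - 1 - 1 = y - 2 by ring.
have e3 : y + 1 + 1 = y + 2 by ring.
have e4 : y - 1 + 1 = y by ring.
rewrite e1 e2 e3 e4.
have t1 : ~~ (2 %| ((2 * m).+1)%:Z)%Z by lia.
have t2 : (2 %| ((2 * m).+2)%:Z)%Z by lia.
rewrite !(ui_T_odd _ _ t1) (ui_X_odd _ _ hy) (ui_even (y - 1) ((2 * m).+2)%:Z) //; last by lia.
split; ring.
Qed.

Lemma inv m y : (exists k, y = 4 * k + 2 * m%:Z + 3) ->
  (D (2 * m) y).2 = (D (2 * m) y).1 /\ (D (2 * m) y).1 = (D (2 * m) (y - 2)).2.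
Proof.
elim: m y => [|m IH] y [k hk].
  rewrite /=; have -> : (y == 1) = false by apply/negbTE; lia.
  by [].
have -> : (2 * m.+1 = (2 * m).+2)%N by rewrite mulnS.
have hy1 : ~~ (2 %| y)%Z by lia.
have hy2 : ~~ (2 %| y - 2)%Z by lia.
have [A1 A2] := two_step m _ hy1.
have [B1 _] := two_step m _ hy2.
rewrite subrK in B1.
have [C1 C2] := IH (y + 2) ltac:(by exists (k + 1); lia).
have [E1 E2] := IH (y - 2) ltac:(by exists k; lia).
rewrite addrK in C2.
rewrite A1 A2 B1 C1 C2 E1; split; ring.
Qed.

Lemma cc_SS n : cc n.+2 = 2^-1 * cc n.
Proof. by rewrite /cc !exprSr -mulrA -expr2 sqrtCK invfM mulrC. Qed.

Theorem proposition11 (x t : int) :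
  (2 %| x + t)%Z -> 1 < t ->
  b1 x t = 2^-1 * (b1 (x + 1) (t - 1) + b2 (x + 1) (t - 1)) /\
  b2 x t = 2^-1 * (3 * b1 (x - 1) (t - 1) - b2 (x - 1) (t - 1)).
Proof.
move=> h ht.
have [p ep] : exists p : nat, t = (p.+2)%:Z by exists (absz t - 2)%N; lia.
subst t.
have d1 : (2 %| x + 1 + ((p.+2)%:Z - 1))%Z by lia.
have d2 : (2 %| x - 1 + ((p.+2)%:Z - 1))%Z by lia.
have q0 : 0 < (p.+2)%:Z by lia.
have q1 : 0 < (p.+2)%:Z - 1 by lia.
have n0 : absz (2 * (p.+2)%:Z - 1)%R = ((2 * p).+3)%N by lia.
have n1 : absz (2 * ((p.+2)%:Z - 1) - 1)%R = ((2 * p).+1)%N by lia.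
have y1 : 2 * (x + 1) - 1 = (2 * x - 1) + 2 by ring.
have y2 : 2 * (x - 1) - 1 = (2 * x - 1) - 2 by ring.
rewrite /b1 /b2 h d1 d2 q0 q1 n0 n1 y1 y2 !a1_D !a2_D cc_SS.
have hy : ~~ (2 %| 2 * x - 1)%Z by lia.
have [A1 A2] := two_step p _ hy.
have [I1 I2] : (D (2 * p) (2 * x - 1)).2 = (D (2 * p) (2 * x - 1)).1 /\
               (D (2 * p) (2 * x - 1)).1 = (D (2 * p) (2 * x - 1 - 2)).2.
  apply: inv; case/dvdzP: h => q hq; exists (q - p%:Z - 2); lia.
rewrite A1 A2 I1 I2 !(intrD, intrB); split; ring.
Qed.
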